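(* The radical $\sqrt{\nabla}$ of a finite irreducible undirected graph $\nabla$ (loops allowed) is itself an irreducible graph.
   Context: $\nabla(x)$ is the set of vertices adjacent to $x$, $\nabla(X)=\bigcap_{x\in X}\nabla(x)$ (with $\nabla(\emptyset)=V$), and $\mathbb{L}(\nabla)=\{X\subseteq V:\nabla(\nabla(X))=X\}$ ordered by inclusion. A graph is irreducible if distinct vertices have distinct neighborhoods. An element $a$ of a lattice is (completely) meet-irreducible if $a=\bigwedge A$ for a subset $A$ implies $a\in A$; a vertex $x$ is essential if $\nabla(x)$ is meet-irreducible in $\mathbb{L}(\nabla)$. The radical $\sqrt{\nabla}$ is the induced subgraph of $\nabla$ on the set of its essential vertices (adjacency inherited from $\nabla$). *)

(* Defs.v *)
From mathcomp Require Import all_boot.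
Set Implicit Arguments. Unset Strict Implicit. Unset Printing Implicit Defensive.

(* A finite undirected graph (loops allowed) on vertex set T:
   a symmetric relation e : rel T (no irreflexivity assumed). *)
Definition undirected (T : finType) (e : rel T) : Prop := symmetric e.

Section Nabla.
Variables (T : finType) (e : rel T).

Definition nbhd (x : T) : {set T} := [set y | e x y].

(* nabla(X) = intersection of nabla(x), x in X; nabla(emptyset) = V *)
Definition nablaS (X : {set T}) : {set T} := [set y | [forall x in X, e x y]].

(* L(nabla): the closed sets, ordered by inclusion *)
Definition closedS (X : {set T}) : bool := nablaS (nablaS X) == X.

Definition is_meet (A : {set {set T}}) (a : {set T}) : bool :=
  [&& closedS a,
      [forall b in A, a \subset b] &
      [forall c : {set T}, closedS c ==>
          ([forall b in A, c \subset b] ==> (c \subset a))]].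

(* (completely) meet-irreducible element of L(nabla):
   a = /\ A for a subset A of L(nabla) implies a \in A *)
Definition meet_irreducible (a : {set T}) : bool :=
  closedS a &&
  [forall A : {set {set T}}, [forall b in A, closedS b] ==>
     is_meet A a ==> (a \in A)].

Definition essential (x : T) : bool := meet_irreducible (nbhd x).

(* the set of essential vertices (vertex set of the radical) *)
Definition essentials : {set T} := [set x | essential x].

End Nabla.

Definition irreducible_on (T : finType) (e : rel T) (S : {set T}) : Prop :=
  forall x y, x \in S -> y \in S -> x != y ->
    nbhd e x :&: S != nbhd e y :&: S.

Definition irreducible_graph (T : finType) (e : rel T) : Prop :=
  irreducible_on e [set: T].

Definition radical_irreducible (T : finType) (e : rel T) : Prop :=
  irreducible_on e (essentials e).

(* Main.v *)
Require Import Defs.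
From mathcomp Require Import all_boot.
From mathcomp Require Import zify.

Section Aux.
Variables (T : finType) (e : rel T).
Hypothesis esym : symmetric e.

Lemma inN (X : {set T}) y : (y \in nablaS e X) = [forall x in X, e x y].
Proof. by rewrite inE. Qed.

Lemma nabla_anti (X Y : {set T}) : X \subset Y -> nablaS e Y \subset nablaS e X.
Proof.
move=> XY; apply/subsetP=> y; rewrite !inN => /forall_inP H.
by apply/forall_inP=> x xX; apply: H; apply: (subsetP XY).
Qed.

Lemma nabla_ext (X : {set T}) : X \subset nablaS e (nablaS e X).
Proof.
apply/subsetP=> w wX; rewrite inN; apply/forall_inP=> y.
by rewrite inN => /forall_inP H; rewrite esym; apply: H.
Qed.

Lemma nabla3 (X : {set T}) : nablaS e (nablaS e (nablaS e X)) = nablaS e X.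
Proof.
apply/eqP; rewrite eqEsubset; apply/andP; split.
  exact: nabla_anti (nabla_ext X).
exact: nabla_ext.
Qed.

Lemma closed_nabla (X : {set T}) : closedS e (nablaS e X).
Proof. by rewrite /closedS nabla3. Qed.

Lemma nbhdE x : nbhd e x = nablaS e [set x].
Proof.
apply/setP=> y; rewrite inN inE; apply/idP/forall_inP.
  by move=> H z; rewrite inE => /eqP ->.
by move=> H; apply: H; rewrite inE.
Qed.

Lemma closure_min (X b : {set T}) : X \subset b -> closedS e b ->
  nablaS e (nablaS e X) \subset b.
Proof.
move=> Xb /eqP cb; rewrite -cb; apply: nabla_anti; exact: nabla_anti.
Qed.

Lemma mirr_cover k : forall c : {set T}, #|T| - #|c| <= k -> closedS e c ->
  forall v, (forall m, meet_irreducible e m -> c \subset m -> v \in m) -> v \in c.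
Proof.
elim: k => [|k IH] c Hk cc v Hv.
  have: #|c| = #|T| by apply/eqP; rewrite eqn_leq max_card /=; rewrite leqn0 subn_eq0 in Hk.
  rewrite -cardsT => hc; have -> : c = setT.
    by apply/eqP; rewrite eqEcard subsetT hc leqnn.
  by rewrite inE.
case mc: (meet_irreducible e c); first by apply: Hv.
move: mc; rewrite /meet_irreducible cc /= => /negbT; rewrite negb_forall => /existsP [A].
rewrite negb_imply => /andP [/forall_inP Acl]; rewrite negb_imply => /andP [mA cA].
move: mA => /and3P [_ /forall_inP cb /forallP cmax].
have vb : forall b, b \in A -> v \in b.
  move=> b bA; have cbp : c \proper b.
    rewrite properEneq cb // andbT; apply: contraNN cA => /eqP ->; done.
  apply: (IH b) => //; last first.
    by move=> m mm bm; apply: Hv => //; apply: subset_trans bm; apply: cb.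
    by apply: Acl.
  have h2 := proper_card cbp; have h1 : #|b| <= #|T| := max_card _.
  rewrite -ltnS; apply: leq_trans Hk; lia.
have H := cmax (nablaS e (nablaS e (v |: c))).
rewrite closed_nabla /= in H.
have : nablaS e (nablaS e (v |: c)) \subset c.
  apply: (implyP H); apply/forall_inP=> b bA; apply: closure_min; last exact: Acl.
  by rewrite subUset sub1set vb // cb.
move/subsetP; apply; apply: (subsetP (nabla_ext _)); exact: setU11.
Qed.

Lemma nbhd_closed x : closedS e (nbhd e x).
Proof. by rewrite nbhdE closed_nabla. Qed.

Lemma mirr_nbhd (m : {set T}) : meet_irreducible e m -> exists2 z, z \in essentials e & m = nbhd e z.
Proof.
move=> mm; have /andP [cm /forallP H] := mm.
pose A := [set nbhd e y | y in nablaS e m].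
have : m \in A.
  apply: (implyP (implyP (H A) _)).
    by apply/forall_inP=> b /imsetP [y _ ->]; apply: nbhd_closed.
  rewrite /is_meet cm /=; apply/andP; split.
    apply/forall_inP=> b /imsetP [y ym ->]; apply/subsetP=> w wm.
    rewrite inE esym; move: ym; rewrite inN => /forall_inP; apply; done.
  apply/forallP=> c; apply/implyP=> _; apply/implyP=> /forall_inP Hc.
  move/eqP: cm => <-; apply/subsetP=> w wc; rewrite inN; apply/forall_inP=> y ym.
  have := Hc (nbhd e y); rewrite imset_f // => /(_ isT) /subsetP /(_ w wc).
  by rewrite inE.
case/imsetP=> z _ mz; exists z => //; by rewrite inE /essential -mz.
Qed.

End Aux.

Theorem mainTheorem16 (T : finType) (e : rel T) :
  undirected e -> irreducible_graph e -> radical_irreducible e.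
Proof.
move=> esym irr x y xE yE xy.
apply/negP=> /eqP Heq.
have key : forall u, u \in essentials e -> forall v,
   (v \in nbhd e u) = [forall z in essentials e,
        (nbhd e v \subset nbhd e z) ==> (z \in nbhd e u :&: essentials e)].
  move=> u uE v; apply/idP/forall_inP.
    move=> uv z zE; apply/implyP=> /subsetP S; rewrite inE zE andbT.
    have : u \in nbhd e z by apply: S; rewrite inE esym; rewrite inE in uv.
    by rewrite !inE esym.
  move=> H; rewrite inE esym.
  have : u \in nbhd e v.
    apply: (@mirr_cover T e esym (#|T| - #|nbhd e v|)) => //; first exact: nbhd_closed.
    move=> m mm vm; have [z zE mz] := @mirr_nbhd T e esym m mm; subst m.
    have := implyP (H z zE) vm; rewrite !inE => /andP [uz _]; by rewrite esym.
  by rewrite inE.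
have : nbhd e x = nbhd e y.
  apply/setP=> v; rewrite (key x xE) (key y yE) Heq; done.
move=> N; have := irr x y (in_setT x) (in_setT y) xy; by rewrite N eqxx.
Qed.
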